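(* Let $p\ge 1$ be an integer, $t\ge 2$, let $n_1,\dots,n_t$ be positive integers, and let $G=K_{n_1,\dots,n_t}$ be the complete $t$-partite graph with partite sets $V_1,\dots,V_t$, $|V_i|=n_i$. Let $N_t=\{1,\dots,t\}$ and $f(I)=\sum_{i\in I}n_i$ for $I\subseteq N_t$, and assume $f(N_t)>p$. Then $$\gamma_p(G)=\min\{s_1,\ p+s_2\}.$$
   Context: A set $S\subseteq V(G)$ is a $p$-dominating set of $G$ if every vertex $v\in V(G)\setminus S$ has at least $p$ neighbors in $S$; $\gamma_p(G)$ is the minimum cardinality of a $p$-dominating set of $G$. Define $s_1=\min\{f(I): I\subseteq N_t,\ f(I)\ge p\}$. Define the family $$\mathscr{I}_p=\Big\{I\subset N_t:\ |I|\le t-2,\ f(I)<p,\ \text{and } \Big\lceil\tfrac{p-f(I)}{t-|I|-1}\Big\rceil\le n_i \text{ for each } i\in N_t\setminus I\Big\},$$ and $s_2=\min\{\lceil\frac{p-f(I)}{t-|I|-1}\rceil: I\in\mathscr{I}_p\}$ if $\mathscr{I}_p\ne\emptyset$, and $s_2=\infty$ if $\mathscr{I}_p=\emptyset$. *)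

(* Defs.v *)
From mathcomp Require Import all_boot.
Set Implicit Arguments. Unset Strict Implicit. Unset Printing Implicit Defensive.

(* Complete t-partite graph on a finite vertex type V: [part v] is the index
   of the partite set containing v; two vertices are adjacent iff they lie in
   different partite sets. *)
Definition cmp_adj (V : finType) (t : nat) (part : V -> 'I_t) : rel V :=
  fun x y => part x != part y.

Definition p_dominating (V : finType) (e : rel V) (p : nat) (S : {set V}) : bool :=
  [forall v, (v \notin S) ==> (p <= #|[set u in S | e v u]|)].

(* gamma_p: minimum cardinality of a p-dominating set (V itself is one). *)
Definition gamma_p (V : finType) (e : rel V) (p : nat) : nat :=
  \big[minn/#|V|]_(S : {set V} | p_dominating e p S) #|S|.

Definition fsum (t : nat) (n : 'I_t -> nat) (I : {set 'I_t}) : nat :=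
  \sum_(i in I) n i.

Definition ceildiv (a b : nat) : nat := (a + b.-1) %/ b.

Definition s1 (t : nat) (n : 'I_t -> nat) (p : nat) : nat :=
  \big[minn/fsum n setT]_(I : {set 'I_t} | p <= fsum n I) fsum n I.

Definition s2_val (t : nat) (n : 'I_t -> nat) (p : nat) (I : {set 'I_t}) : nat :=
  ceildiv (p - fsum n I) (t - #|I| - 1).

Definition in_Ip (t : nat) (n : 'I_t -> nat) (p : nat) (I : {set 'I_t}) : bool :=
  [&& I \proper setT, #|I| <= t - 2, fsum n I < p &
      [forall i, (i \notin I) ==> (s2_val n p I <= n i)]].

(* s2 when \mathscr{I}_p is nonempty (the default p is never used then) *)
Definition s2 (t : nat) (n : 'I_t -> nat) (p : nat) : nat :=
  \big[minn/p]_(I : {set 'I_t} | in_Ip n p I) s2_val n p I.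

(* min{s1, p + s2}, with s2 = infinity when \mathscr{I}_p is empty *)
Definition gamma_formula (t : nat) (n : 'I_t -> nat) (p : nat) : nat :=
  if [exists I, in_Ip n p I] then minn (s1 n p) (p + s2 n p) else s1 n p.

(* Main.v *)
Require Import Defs.
From mathcomp Require Import all_boot zify.
Set Implicit Arguments. Unset Strict Implicit. Unset Printing Implicit Defensive.

Lemma bigmin_le (I : finType) (P : pred I) (F : I -> nat) x0 i :
  P i -> \big[minn/x0]_(j | P j) F j <= F i.
Proof.
move=> Pi; rewrite unlock /reducebig.
have : i \in index_enum I by rewrite mem_index_enum.
elim: (index_enum I) => //= j s IH; rewrite in_cons => /orP [/eqP <-|Hs].
  by rewrite Pi geq_minl.
case: (P j) => //=; last exact: IH.
exact: leq_trans (geq_minr _ _) (IH Hs).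
Qed.

Lemma bigmin_ex (I : finType) (P : pred I) (F : I -> nat) x0 :
  \big[minn/x0]_(j | P j) F j = x0 \/
  exists2 i, P i & \big[minn/x0]_(j | P j) F j = F i.
Proof.
apply: (big_ind (fun y => y = x0 \/ exists2 i, P i & y = F i)).
- by left.
- move=> x y Hx Hy; rewrite /minn; case: ifP => _; [exact Hx | exact Hy].
- by move=> i Pi; right; exists i.
Qed.

Lemma distr (T : finType) (J : {set T}) (u : T -> nat) R :
  R <= \sum_(j in J) u j ->
  exists b : T -> nat, (forall j, b j <= u j) /\ \sum_(j in J) b j = R.
Proof.
have [k Hk] : exists k, #|J| = k by eexists.
elim: k J Hk R => [|k IH] J Hk R HR.
  move/eqP: Hk; rewrite cards_eq0 => /eqP HJ; subst J.
  move: HR; rewrite big_set0 leqn0 => /eqP ->.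
  by exists (fun _ => 0); split => //; rewrite big_set0.
have : J != set0 by rewrite -cards_eq0 Hk.
case/set0Pn => x xJ.
move: HR; rewrite (big_setD1 _ xJ) /= => HR.
have Hk' : #|J :\ x| = k by move: Hk; rewrite (cardsD1 x) xJ; case.
have [b' [Hb1 Hb2]] := IH _ Hk' (R - minn (u x) R) ltac:(lia).
exists (fun j => if j == x then minn (u x) R else b' j); split.
  by move=> j; case: eqP => [->|_] //; apply: geq_minl.
rewrite (big_setD1 _ xJ) /= eqxx.
rewrite (eq_bigr b'); first by rewrite Hb2; lia.
by move=> j; rewrite in_setD1 => /andP[/negPf -> _].
Qed.

Lemma ceil_le x d m : 0 < d -> x <= d * m -> ceildiv x d <= m.
Proof.
move=> d0 H; rewrite /ceildiv -ltnS ltn_divLR // mulSn mulnC; lia.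
Qed.

Lemma ceil_ge x d : 0 < d -> x <= d * ceildiv x d.
Proof.
move=> d0; rewrite /ceildiv.
have := ltn_ceil (x + d.-1) d0; rewrite mulSn mulnC; lia.
Qed.

Lemma split_sum t (g : 'I_t -> nat) (I : {set 'I_t}) :
  \sum_i g i = \sum_(i in I) g i + \sum_(i in ~: I) g i.
Proof.
rewrite (bigID (mem I)) /=; congr (_ + _).
by apply: eq_bigl => i; rewrite in_setC.
Qed.

Lemma fsumT t (n : 'I_t -> nat) : fsum n setT = \sum_i n i.
Proof. by rewrite /fsum; apply: eq_bigl => i; rewrite inE. Qed.

Definition feas t (n : 'I_t -> nat) p (a : 'I_t -> nat) :=
  (forall i, a i <= n i) /\ (forall i, a i < n i -> p + a i <= \sum_j a j).

Lemma split_sum1 t (g : 'I_t -> nat) (I : {set 'I_t}) j : j \notin I ->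
  \sum_i g i = \sum_(i in I) g i + g j + \sum_(i in ~: I :\ j) g i.
Proof.
move=> jI; rewrite (split_sum g I) (big_setD1 _ (_ : j \in ~: I)) ?addnA //.
by rewrite in_setC.
Qed.

Definition LBP t (n : 'I_t -> nat) p s :=
  (exists I, p <= fsum n I /\ fsum n I <= s) \/
  (exists I, in_Ip n p I /\ p + s2_val n p I <= s).

Lemma LB_step t (n : 'I_t -> nat) p (a : 'I_t -> nat) :
  p < fsum n setT -> feas n p a ->
  (forall a', feas n p a' -> #|[set i | a' i < n i]| < #|[set i | a i < n i]| ->
      LBP n p (\sum_i a' i)) ->
  LBP n p (\sum_i a i).
Proof.
move=> Htot [Han Hfe] IH.
set s := \sum_i a i.
set I := [set i | n i <= a i].
have HaI : forall i, i \in I -> a i = n i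
  by move=> i; rewrite inE => H; apply/eqP; rewrite eqn_leq Han.
have HnI : forall i, i \notin I -> a i < n i by move=> i; rewrite inE ltnNge.
have Hs : s = fsum n I + \sum_(i in ~: I) a i.
  by rewrite /s (split_sum a I); congr (_ + _); apply: eq_bigr.
case: (leqP p (fsum n I)) => HfI.
  by left; exists I; split => //; rewrite Hs leq_addr.
case: (boolP [exists j, (j \notin I) && (n j + p <= s)]).
  case/existsP => j /andP [jI Hj].
  have Hsj := split_sum1 a jI; rewrite -/s in Hsj.
  have HaIs : \sum_(i in I) a i = fsum n I by apply: eq_bigr.
  rewrite HaIs in Hsj.
  set Jj := ~: I :\ j in Hsj.
  set SJ := \sum_(i in Jj) a i in Hsj.
  have [b [Hb1 Hb2]] := distr (J := Jj) (u := a) (R := SJ - (n j - a j)) (leq_subr _ _).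
  pose a' := fun i => if i \in I then a i else if i == j then n j else b i.
  have Hs' : \sum_i a' i = s.
    rewrite (split_sum1 a' jI).
    have -> : \sum_(i in I) a' i = fsum n I.
      by rewrite -HaIs; apply: eq_bigr => i iI; rewrite /a' iI.
    have -> : \sum_(i in Jj) a' i = \sum_(i in Jj) b i.
      apply: eq_bigr => i; rewrite in_setD1 in_setC => /andP [/negPf ij /negPf iI].
      by rewrite /a' iI ij.
    rewrite Hb2 /a' (negPf jI) eqxx.
    have := HnI j jI; clear -Hsj Hj HfI; clearbody s SJ; lia.
  have Ha'le : forall i, a' i <= a i \/ i = j.
    move=> i; rewrite /a'; case: ifP => _; first by left.
    by case: eqP => [->|_]; [right | left].
  rewrite -Hs'; apply: IH.
    split.
      move=> i; rewrite /a'; case: ifP => // _; case: eqP => [->|_] //.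
      exact: leq_trans (Hb1 i) (Han i).
    move=> i Hi; rewrite Hs'.
    case: (Ha'le i) => [Hle|Hij].
      apply: leq_trans (Hfe i _); first by rewrite leq_add2l.
      case: (boolP (i \in I)) => iI; last exact: HnI.
      by move: Hi; rewrite /a' iI HaI // ltnn.
    by subst i; move: Hi; rewrite /a' (negPf jI) eqxx ltnn.
  apply: proper_card; apply/properP; split.
    apply/subsetP => i; rewrite !inE => Hi.
    case: (boolP (i \in I)) => iI; last by rewrite HnI.
    by move: Hi; rewrite /a' iI HaI // ltnn.
  exists j; first by rewrite inE HnI.
  by rewrite inE /a' (negPf jI) eqxx ltnn.
move=> Hno.
have Hlt : forall j, j \notin I -> s < n j + p.
  move=> j jI; rewrite ltnNge; apply/negP => H; move/negP: Hno; apply.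
  by apply/existsP; exists j; rewrite jI.
have : ~: I != set0.
  apply/negP => /eqP HC.
  have HIT : I = setT by rewrite -(setCK I) HC setC0.
  by move: HfI; rewrite HIT ltnNge ltnW.
case/set0Pn => j0 j0I; have j0I' : j0 \notin I by rewrite -in_setC.
have Hsj := split_sum1 a j0I'; rewrite -/s in Hsj.
have HaIs : \sum_(i in I) a i = fsum n I by apply: eq_bigr.
rewrite HaIs in Hsj.
set Jj := ~: I :\ j0 in Hsj.
set SJ := \sum_(i in Jj) a i in Hsj.
have Hp0 : p + a j0 <= s := Hfe j0 (HnI j0 j0I').
set m := s - p.
have Ham : forall i, i \notin I -> a i <= m.
  move=> i iI; have := Hfe i (HnI i iI); rewrite -/s /m; lia.
have HSJ : SJ <= #|Jj| * m.
  rewrite /SJ -sum_nat_const; apply: leq_sum => i.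
  by rewrite in_setD1 in_setC => /andP [_ /Ham].
have HcI : #|I| + #|~: I| = t by rewrite cardsC card_ord.
have HJj : #|~: I| = #|Jj|.+1 by rewrite (cardsD1 j0) j0I.
have Hkey : p <= fsum n I + #|Jj| * m by clearbody SJ; lia.
have Hd : t - #|I| - 1 = #|Jj| by lia.
have Hd0 : 0 < #|Jj|.
  rewrite lt0n; apply/negP => /eqP H0; move: Hkey; rewrite H0 mul0n; lia.
have Hc : s2_val n p I <= m.
  by rewrite /s2_val Hd; apply: ceil_le => //; clearbody SJ; lia.
right; exists I; split; last by rewrite /m; clearbody SJ; lia.
apply/and4P; split.
- rewrite properT; apply/negP => /eqP HT; by move: j0I'; rewrite HT inE.
- by move: HcI HJj Hd0; set x := #|I|; set y := #|~: I|; set z := #|Jj|; lia.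
- done.
- apply/forallP => i; apply/implyP => iI.
  by apply: leq_trans Hc _; have := Hlt i iI; rewrite /m; clearbody SJ; lia.
Qed.

Lemma LB_main t (n : 'I_t -> nat) p (a : 'I_t -> nat) :
  p < fsum n setT -> feas n p a -> LBP n p (\sum_i a i).
Proof.
move=> Htot.
have [k Hk] : exists k, #|[set i | a i < n i]| <= k by eexists.
elim: k a Hk => [|k IH] a Hk Hf; apply: LB_step => // a' Hf' Hlt.
  by move: Hlt Hk; clear; lia.
by apply: IH => //; move: Hlt Hk; clear; lia.
Qed.

Lemma formula_le_s1 t (n : 'I_t -> nat) p : gamma_formula n p <= s1 n p.
Proof. by rewrite /gamma_formula; case: ifP => _ //; apply: geq_minl. Qed.

Lemma LB_formula t (n : 'I_t -> nat) p (a : 'I_t -> nat) :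
  p < fsum n setT -> feas n p a -> gamma_formula n p <= \sum_i a i.
Proof.
move=> Htot Hf; case: (LB_main Htot Hf) => [[I [H1 H2]]|[I [H1 H2]]].
  apply: leq_trans (formula_le_s1 n p) _; apply: leq_trans H2.
  exact: bigmin_le.
rewrite /gamma_formula (introT existsP (ex_intro _ I H1)).
apply: leq_trans (geq_minr _ _) _; apply: leq_trans H2.
by rewrite leq_add2l; apply: bigmin_le.
Qed.

Lemma s2_val_le t (n : 'I_t -> nat) p I : 1 < t -> in_Ip n p I -> s2_val n p I <= p.
Proof.
move=> Ht; case/and4P => _ H2 _ _; rewrite /s2_val; apply: leq_trans (leq_subr (fsum n I) p).
apply: ceil_le; first lia.
set x := p - fsum n I; set d := t - #|I| - 1.
have : 0 < d by rewrite /d; lia.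
by case: d => // d _; rewrite mulSn leq_addr.
Qed.

Lemma S1 t (n : 'I_t -> nat) p : exists a, feas n p a /\ \sum_i a i <= s1 n p.
Proof.
case: (bigmin_ex (fun I => p <= fsum n I) (fsum n) (fsum n setT)) => [H|[I HI H]];
  rewrite /s1 H.
  exists n; split; last by rewrite fsumT.
  by split => // i; rewrite ltnn.
exists (fun i => if i \in I then n i else 0); split.
  split; first by move=> i; case: ifP.
  move=> i; case: ifP => iI; first by rewrite ltnn.
  move=> _; rewrite addn0 (split_sum _ I) (eq_bigr n); last by move=> j ->.
  exact: leq_trans HI (leq_addr _ _).
rewrite (split_sum _ I) (eq_bigr n); last by move=> j ->.
rewrite [X in _ + X]big1 ?addn0 //.
by move=> j; rewrite in_setC => /negPf ->.
Qed.

Lemma S2 t (n : 'I_t -> nat) p I : 1 < t -> in_Ip n p I ->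
  exists a, feas n p a /\ \sum_i a i = p + s2_val n p I.
Proof.
move=> Ht HI; case/and4P: HI => H1 H2 H3 /forallP H4.
set c := s2_val n p I.
have HcI : #|I| + #|~: I| = t by rewrite cardsC card_ord.
have Hge : p - fsum n I <= (t - #|I| - 1) * c.
  by apply: ceil_ge; lia.
have HR : p + c - fsum n I <= \sum_(j in ~: I) c.
  rewrite sum_nat_const.
  move: HcI Hge H2 H3; set x := #|I|; set y := #|~: I|; set f := fsum n I.
  clearbody c; nia.
have [b [Hb1 Hb2]] := distr (J := ~: I) (u := fun _ => c) HR.
have Hsum : \sum_i (fun i => if i \in I then n i else b i) i = p + c.
  rewrite (split_sum _ I) (eq_bigr n); last by move=> j ->.
  rewrite (eq_bigr b); last by move=> j; rewrite in_setC => /negPf ->.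
  rewrite -/(fsum n I) Hb2; lia.
exists (fun i => if i \in I then n i else b i); split => //.
split.
  move=> i; case: ifP => // iI; apply: leq_trans (Hb1 i) _.
  by have := H4 i; rewrite iI.
move=> i; case: ifP => iI; first by rewrite ltnn.
by move=> _; rewrite Hsum leq_add2l.
Qed.

Lemma UB t (n : 'I_t -> nat) p : 1 < t ->
  exists a, feas n p a /\ \sum_i a i <= gamma_formula n p.
Proof.
move=> Ht; have [a1 [Hf1 Hs1]] := S1 n p.
rewrite /gamma_formula; case: ifP => [/existsP [I0 HI0]|_]; last by exists a1.
case: (leqP (s1 n p) (p + s2 n p)) => Hm.
  by exists a1; split => //; rewrite (minn_idPl Hm).
case: (bigmin_ex (in_Ip n p) (s2_val n p) p) => [H|[I HI H]]; rewrite /s2 H.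
  have [a [Ha Hs]] := S2 Ht HI0; exists a; split => //.
  by rewrite Hs leq_add2l s2_val_le.
have [a [Ha Hs]] := S2 Ht HI; exists a; split => //.
by rewrite Hs.
Qed.

Section G.
Variables (t : nat) (V : finType) (part : V -> 'I_t).
Definition Vp (i : 'I_t) := [set v | part v == i].

Lemma card_part (S : {set V}) : #|S| = \sum_i #|S :&: Vp i|.
Proof.
rewrite -sum1_card (partition_big part xpredT) //=.
apply: eq_bigr => i _; rewrite -sum1_card; apply: eq_bigl => v.
by rewrite !inE.
Qed.

Lemma card_nbr (S : {set V}) v :
  #|[set u in S | cmp_adj part v u]| = #|S| - #|S :&: Vp (part v)|.
Proof.
rewrite -cardsD; apply: eq_card => u; rewrite !inE /cmp_adj.
by rewrite andbC eq_sym.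
Qed.

Lemma dom_iff (n : 'I_t -> nat) p (S : {set V}) :
  (forall i, #|Vp i| = n i) ->
  p_dominating (cmp_adj part) p S <-> feas n p (fun i => #|S :&: Vp i|).
Proof.
move=> Hn; rewrite /feas -card_part; split.
- move/forallP => H; split.
    by move=> i; rewrite -Hn; apply: subset_leq_card; apply: subsetIr.
  move=> i Hi.
  have : ~~ (Vp i \subset S).
    apply/negP => Hsub; move: Hi.
    by rewrite (setIidPr Hsub) Hn ltnn.
  case/subsetPn => v vV vS.
  have := implyP (H v) vS; rewrite card_nbr.
  move: vV; rewrite inE => /eqP ->.
  have : #|S :&: Vp i| <= #|S| by apply: subset_leq_card; apply: subsetIl.
  lia.
- move=> [H1 H2]; apply/forallP => v; apply/implyP => vS.
  rewrite card_nbr.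
  have Hi : #|S :&: Vp (part v)| < n (part v).
    rewrite -Hn; apply: proper_card; apply/properP; split; first exact: subsetIr.
    by exists v; rewrite !inE ?eqxx // (negPf vS).
  have := H2 _ Hi.
  have : #|S :&: Vp (part v)| <= #|S| by apply: subset_leq_card; apply: subsetIl.
  lia.
Qed.

Lemma exists_S (n a : 'I_t -> nat) :
  (forall i, #|Vp i| = n i) -> (forall i, a i <= n i) ->
  exists S : {set V}, forall i, #|S :&: Vp i| = a i.
Proof.
move=> Hn Ha.
pose B i := [set x in take (a i) (enum (Vp i))].
have BV : forall i, B i \subset Vp i.
  by move=> i; apply/subsetP => x; rewrite inE => /mem_take; rewrite mem_enum.
exists (\bigcup_i B i) => i.
have -> : \bigcup_i B i :&: Vp i = B i.
  apply/setP => v; rewrite in_setI; apply/andP/idP.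
    case=> /bigcupP [j _ vB] vi.
    have := subsetP (BV j) v vB; rewrite !inE => /eqP vj.
    by move: vi vB; rewrite !inE vj => /eqP ->.
  move=> vB; split; first by apply/bigcupP; exists i.
  exact: subsetP (BV i) v vB.
rewrite cardsE; move/card_uniqP: (take_uniq (a i) (enum_uniq (mem (Vp i)))) => ->.
by rewrite size_takel // -cardE Hn.
Qed.
End G.

Theorem theorem9 (p t : nat) (n : 'I_t -> nat) (V : finType) (part : V -> 'I_t) :
  1 <= p -> 2 <= t ->
  (forall i, 0 < n i) ->
  (forall i, #|[set v | part v == i]| = n i) ->
  p < fsum n setT ->
  gamma_p (cmp_adj part) p = gamma_formula n p.
Proof.
move=> Hp Ht Hpos Hn Htot.
have Hn' : forall i, #|Vp part i| = n i := Hn.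
apply/eqP; rewrite eqn_leq; apply/andP; split.
  have [a [[Ha1 Ha2] Hs]] := UB n p Ht.
  have [S HS] := exists_S Hn' Ha1.
  have HdS : p_dominating (cmp_adj part) p S.
    apply/(dom_iff _ _ Hn'); split.
      by move=> i; rewrite HS.
    move=> i; rewrite HS -(card_part part) => Hi.
    have -> : #|S| = \sum_i a i by rewrite (card_part part); apply: eq_bigr => j _; rewrite HS.
    exact: Ha2.
  rewrite /gamma_p; apply: leq_trans (bigmin_le (fun S : {set V} => #|S|) #|V| HdS) _.
  by rewrite (card_part part) (eq_bigr a) // => j _; rewrite HS.
apply: (big_ind (fun x => gamma_formula n p <= x)).
- have -> : #|V| = \sum_i n i.
    by rewrite -cardsT (card_part part); apply: eq_bigr => i _; rewrite setTI.
  apply: LB_formula => //; split => // i; by rewrite ltnn.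
- by move=> x y Hx Hy; rewrite leq_min Hx Hy.
- move=> S /(dom_iff _ _ Hn') HS.
  rewrite (card_part part); exact: LB_formula.
Qed.
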